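(* Let $\zeta\in\mathcal{PMF}(S)$ and suppose there exist a sequence $(\xi_k)$ in $\mathcal{PMF}(S)$ converging to $\zeta$ and constants $N_0>0$, $a>0$, $b>0$ such that for every $k$ and every $0<N\le N_0$, $$aN^{h/2}\le\nu(\{\eta\in\mathcal{PMF}(S):i(\eta,\xi_k)\le N\})\le bN^{h/2}.$$ Then there exist $N_1\in(0,N_0]$, $A>0$, $B>0$ and $D_1,D_2\in\mathbb R$ such that for all $0<N\le N_1$, $$-A\ln N+D_1\le\Psi(\zeta)_{\ge N}\le -B\ln N+D_2,$$ where $\Psi(\zeta)_{\ge N}=\int_{\{\eta\in\mathcal{PMF}(S):i(\zeta,\eta)\ge N\}}i(\zeta,\eta)^{-h/2}\,d\nu(\eta)$.
   Context: $S$ is a closed connected orientable surface of genus $g\ge2$, $h=6g-6$, $\mathcal T(S)$ its Teichmüller space with base point $o$. $\mathcal{MF}(S)$ is the space of measured foliations, $\mathcal{PMF}(S)$ its projectivization, $i(\cdot,\cdot)$ the continuous geometric intersection number, $\mathrm{Ext}_o$ the extremal length at $o$, $\nu_{Th}$ the Thurston measure. Points of $\mathcal{PMF}(S)$ are identified with their representatives $\xi$ satisfying $\mathrm{Ext}_o(\xi)=1$ (so $i$ becomes a continuous function on $\mathcal{PMF}(S)\times\mathcal{PMF}(S)$), and $\nu$ is the probability measure on $\mathcal{PMF}(S)$ proportional to $A\mapsto\nu_{Th}(\{t\xi:\xi\in A,0\le t\le1\})$. *)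

(* Defs.v *)
From HB Require Import structures.
From mathcomp Require Import all_boot all_order all_algebra.
From mathcomp Require Import all_classical all_reals all_analysis.
Set Implicit Arguments. Unset Strict Implicit. Unset Printing Implicit Defensive.
Import Order.TTheory GRing.Theory Num.Theory numFieldNormedType.Exports.
Local Open Scope classical_set_scope.
Local Open Scope ring_scope.

Definition borelType (T : ptopologicalType) := g_sigma_algebraType (@open T).

Definition Psi_ge (R : realType) (T : ptopologicalType)
  (nu : probability (borelType T) R) (i : T -> T -> R) (h : R) (zeta : T) (N : R)
  : \bar R :=
  (\int[nu]_(eta in [set eta : borelType T | (N <= i zeta eta)%R])
      ((i zeta eta) `^ (- (h / 2)))%:E)%E.

(* Main.v *)
Require Import Defs.
From HB Require Import structures.
From mathcomp Require Import all_boot all_order all_algebra.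
From mathcomp Require Import all_classical all_reals all_analysis.
From mathcomp Require Import measurable_realfun.
From Stdlib Require Import Lia.
From mathcomp Require Import zify ring lra.
Import Order.TTheory GRing.Theory Num.Theory numFieldNormedType.Exports.
Local Open Scope classical_set_scope.
Local Open Scope ring_scope.


Lemma cont_mfun (R : realType) (T : ptopologicalType) (f : T -> R) :
  continuous f -> measurable_fun (setT : set (borelType T)) f.
Proof.
move=> cf; apply: (measurability _ (measurable_realfun.RGenOpens.measurableE R)).
move=> _ [_ [x [y ->]] <-]; apply: sub_sigma_algebra.
rewrite setTI; apply: (proj1 (continuousP f) cf); exact: interval_open.
Qed.

Lemma mpre (R : realType) (T : ptopologicalType) (f : T -> R) (Y : set R) :
  continuous f -> measurable Y -> measurable [set x : borelType T | Y (f x)].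
Proof.
move=> cf mY; have := @cont_mfun R T f cf measurableT Y mY.
by rewrite setTI.
Qed.

Lemma m_le (R : realType) (T : ptopologicalType) (f : T -> R) (N : R) :
  continuous f -> measurable [set x : borelType T | f x <= N].
Proof.
move=> cf; have := @mpre R T f _ cf (measurable_itv `]-oo, N]).
congr measurable; apply/seteqP; split => x /=; by rewrite in_itv.
Qed.

Lemma m_ge (R : realType) (T : ptopologicalType) (f : T -> R) (N : R) :
  continuous f -> measurable [set x : borelType T | N <= f x].
Proof.
move=> cf; have := @mpre R T f _ cf (measurable_itv `[N, +oo[).
congr measurable; apply/seteqP; split => x /=; by rewrite in_itv /= andbT.
Qed.

Lemma m_gt (R : realType) (T : ptopologicalType) (f : T -> R) (N : R) :
  continuous f -> measurable [set x : borelType T | N < f x].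
Proof.
move=> cf; have := @mpre R T f _ cf (measurable_itv `]N, +oo[).
congr measurable; apply/seteqP; split => x /=; by rewrite in_itv /= andbT.
Qed.

Lemma m_co (R : realType) (T : ptopologicalType) (f : T -> R) (N M : R) :
  continuous f -> measurable [set x : borelType T | N <= f x < M].
Proof.
move=> cf; have := @mpre R T f _ cf (measurable_itv `[N, M[).
congr measurable; apply/seteqP; split => x /=; by rewrite in_itv.
Qed.

Lemma m_oc (R : realType) (T : ptopologicalType) (f : T -> R) (N M : R) :
  continuous f -> measurable [set x : borelType T | N < f x <= M].
Proof.
move=> cf; have := @mpre R T f _ cf (measurable_itv `]N, M]).
congr measurable; apply/seteqP; split => x /=; by rewrite in_itv.
Qed.


Lemma ehelp (R : realType) (a b X Y : R) (U S : \bar R) : 0 < X -> 0 < Y -> 0 < a ->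
  2 * b <= a * Y -> U \is a fin_num -> S \is a fin_num ->
  ((a * (Y * X))%:E <= U + S)%E -> (U <= (b * X)%:E)%E ->
  ((a / 2)%:E <= ((Y * X)^-1)%:E * S)%E.
Proof.
move=> X0 Y0 a0 lb; case: U => // u; case: S => // s _ _.
rewrite -EFinD !lee_fin => h1 h2.
rewrite [_^-1 * s]mulrC ler_pdivlMr ?mulr_gt0 //.
have hh : 0 <= (a * Y - 2 * b) * X by rewrite mulr_ge0 ?subr_ge0 // ltW.
nra.
Qed.

Lemma steps (R : realType) (T : ptopologicalType) (nu : probability (borelType T) R)
 (phi : T -> R) (phic : continuous phi) (phi0 : forall x, 0 <= phi x)
 (p : nat) (p0 : (0 < p)%N) (a b N1 : R) (a0: 0 < a) (b0 : 0 < b)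
 (HF : forall N, 0 < N -> N <= N1 ->
   ((a * N ^+ p)%:E <= nu [set x : borelType T | (phi x <= N)%R])%E /\
   (nu [set x : borelType T | (phi x <= N)%R] <= (b * N ^+ p)%:E)%E)
 (l : R) (l1 : 1 <= l) (lb : 2 * b <= a * l ^+ p) (M : R) (M0 : 0 < M) (lM : l * M <= N1) :
 let f := fun x : borelType T => (phi x `^ (- p%:R))%:E in
 (\int[nu]_(x in [set x : borelType T | (M <= phi x)%R]) f x <=
    (b * l ^+ p)%:E + \int[nu]_(x in [set x : borelType T | (l * M <= phi x)%R]) f x)%E /\
 ((a / 2)%:E + \int[nu]_(x in [set x : borelType T | (l * M < phi x)%R]) f x <=
    \int[nu]_(x in [set x : borelType T | (M < phi x)%R]) f x)%E.
Proof.
move=> f.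
have pw (x : R) : 0 < x -> x `^ (- p%:R) = (x ^+ p)^-1.
  by move=> x0; rewrite powRN powR_mulrn ?ltW.
have f0 x : (0 <= f x)%E by rewrite lee_fin powR_ge0.
have mf : measurable_fun (setT : set (borelType T)) f.
  apply/measurable_EFinP; apply: measurableT_comp (measurable_powR _) _.
  exact: cont_mfun.
have mfD (D : set (borelType T)) : measurable D -> measurable_fun D f.
  by move=> mD; apply: measurable_funS mf.
have l0 : 0 < l by apply: lt_le_trans l1.
have lMM : M <= l * M by rewrite ler_peMl // ltW.
have Xp : 0 < M ^+ p by rewrite exprn_gt0.
have Yp : 0 < l ^+ p by rewrite exprn_gt0.
split.
- have sU : [set x | M <= phi x] = [set x | M <= phi x < l * M] `|` [set x | l * M <= phi x].
    apply/seteqP; split => x /=.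
      by move=> Mx; case: (ltP (phi x) (l * M)) => h; [left; rewrite Mx | right].
    by case=> [/andP[]//|]; apply: le_trans.
  have m1 : measurable [set x : borelType T | M <= phi x < l * M] by exact: m_co.
  have m2 : measurable [set x : borelType T | l * M <= phi x] by exact: m_ge.
  have mfU : measurable_fun ([set x : borelType T | M <= phi x < l * M] `|` [set x | l * M <= phi x]) f.
    by rewrite -sU; apply: mfD; exact: m_ge.
  have dj : [disjoint [set x : borelType T | M <= phi x < l * M] & [set x | l * M <= phi x]].
    rewrite disj_set2E; apply/eqP/seteqP; split => x //= [/andP[_ h1] h2].
    by move: (lt_le_trans h1 h2); rewrite ltxx.
  rewrite sU ge0_integral_setU //.
  apply: leeD; last exact: le_refl.
  apply: (@le_trans _ _ (\int[nu]_(x in [set x : borelType T | (M <= phi x < l * M)%R]) (cst ((M ^+ p)^-1)%:E) x)%E).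
    apply: (ge0_le_integral _ m1).
    + by move=> x _; exact: f0.
    + exact: mfD.
    + exact: measurable_cst.
    + move=> x /= /andP[h1 _]; rewrite /f lee_fin pw; last by apply: lt_le_trans h1.
      rewrite lef_pV2 ?posrE ?exprn_gt0 //; last by apply: lt_le_trans h1.
      by apply: lerXn2r => //; rewrite nnegrE ltW // (lt_le_trans M0 h1).
  rewrite integral_cst; last exact: m_co.
  apply: (@le_trans _ _ (((M ^+ p)^-1)%:E * nu [set x : borelType T | (phi x <= l * M)%R])%E).
    apply: lee_wpmul2l; first by rewrite lee_fin invr_ge0 ltW.
    apply: le_measure; rewrite ?inE; [exact: m_co | exact: m_le |].
    by move=> x /= /andP[_ /ltW].
  apply: (@le_trans _ _ (((M ^+ p)^-1)%:E * (b * (l * M) ^+ p)%:E)%E).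
    apply: lee_wpmul2l; first by rewrite lee_fin invr_ge0 ltW.
    by have [] := HF (l * M) (mulr_gt0 l0 M0) lM.
  rewrite -EFinM lee_fin exprMn; rewrite le_eqVlt; apply/orP; left; apply/eqP.
  by field; rewrite gt_eqF.
- have sU : [set x : borelType T | M < phi x] = [set x | M < phi x <= l * M] `|` [set x | l * M < phi x].
    apply/seteqP; split => x /=.
      by move=> Mx; case: (leP (phi x) (l * M)) => h; [left; rewrite Mx | right].
    by case=> [/andP[]//|]; apply: le_lt_trans.
  have m1 : measurable [set x : borelType T | M < phi x <= l * M] by exact: m_oc.
  have m2 : measurable [set x : borelType T | l * M < phi x] by exact: m_gt.
  have mfU : measurable_fun ([set x : borelType T | M < phi x <= l * M] `|` [set x | l * M < phi x]) f.
    by rewrite -sU; apply: mfD; exact: m_gt.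
  have dj : [disjoint [set x : borelType T | M < phi x <= l * M] & [set x | l * M < phi x]].
    rewrite disj_set2E; apply/eqP/seteqP; split => x //= [/andP[_ h1] h2].
    by move: (le_lt_trans h1 h2); rewrite ltxx.
  rewrite sU ge0_integral_setU //.
  apply: leeD; last exact: le_refl.
  apply: (@le_trans _ _ (\int[nu]_(x in [set x : borelType T | (M < phi x <= l * M)%R]) (cst (((l * M) ^+ p)^-1)%:E) x)%E); last first.
    apply: (ge0_le_integral _ m1).
    + by move=> x _; rewrite /= lee_fin invr_ge0 ltW // exprn_gt0 // mulr_gt0.
    + exact: measurable_cst.
    + exact: mfD.
    + move=> x /= /andP[h1 h2]; rewrite /f lee_fin pw; last by apply: lt_trans h1.
      rewrite lef_pV2 ?posrE ?exprn_gt0 ?mulr_gt0 //; last by apply: lt_trans h1.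
      by apply: lerXn2r => //; rewrite nnegrE // ltW // mulr_gt0.
  rewrite integral_cst //.
  have m3 : measurable [set x : borelType T | phi x <= M] by exact: m_le.
  have eqm : nu [set x : borelType T | (phi x <= l * M)%R] =
      (nu [set x : borelType T | (phi x <= M)%R] + nu [set x : borelType T | (M < phi x <= l * M)%R])%E.
    rewrite -measureU //; last first.
      apply/seteqP; split => x //= [h1 /andP[h2 _]].
      by move: (le_lt_trans h1 h2); rewrite ltxx.
    congr (nu _); apply/seteqP; split => x /=.
      by move=> h; case: (leP (phi x) M) => h'; [left | right; apply/andP].
    by case=> [h|/andP[_ //]]; apply: le_trans lMM.
  have fin (S : set (borelType T)) : measurable S -> nu S = (fine (nu S))%:E.
    by move=> mS; rewrite fineK // fin_num_measure.
  have [hu1 hu2] := HF M M0 (le_trans lMM lM).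
  have [hw1 hw2] := HF (l * M) (mulr_gt0 l0 M0) lM.
  rewrite eqm in hw1.
  rewrite exprMn in hw1 *.
  eapply ehelp; [exact: Xp|exact: Yp|exact: a0|exact: lb| | |exact: hw1|exact: hu2]; exact: fin_num_measure.
Qed.

Lemma pow_ge (R : realType) (l : R) (m : nat) : 2 <= l -> m%:R + 1 <= l ^+ m.
Proof.
move=> l2; elim: m => [|m IH]; first by rewrite expr0 add0r.
rewrite exprS -natr1.
have l0 : 0 <= l by apply: le_trans l2.
have : (m%:R + 1) * 2 <= l * l ^+ m.
  rewrite mulrC; apply: ler_pM => //; by rewrite ?addr_ge0.
apply: le_trans; rewrite mulrDl mul1r; have := ler0n R m; lra.
Qed.

Lemma core (R : realType) (T : ptopologicalType) (nu : probability (borelType T) R)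
 (phi : T -> R) (phic : continuous phi) (phi0 : forall x, 0 <= phi x)
 (p : nat) (p0 : (0 < p)%N) (a b N1 : R) (a0: 0 < a) (b0 : 0 < b) (N10 : 0 < N1)
 (HF : forall N, 0 < N -> N <= N1 ->
   ((a * N ^+ p)%:E <= nu [set x : borelType T | (phi x <= N)%R])%E /\
   (nu [set x : borelType T | (phi x <= N)%R] <= (b * N ^+ p)%:E)%E) :
 exists A B D1 D2 : R, [/\ 0 < A, 0 < B & forall N, 0 < N -> N <= N1 ->
   ((- A * ln N + D1)%:E <= \int[nu]_(x in [set x : borelType T | (N <= phi x)%R]) (phi x `^ (- p%:R))%:E)%E /\
   (\int[nu]_(x in [set x : borelType T | (N <= phi x)%R]) (phi x `^ (- p%:R))%:E <= (- B * ln N + D2)%:E)%E].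
Proof.
pose l := 2 + 2 * b / a.
have l2 : 2 <= l by rewrite /l lerDl divr_ge0 ?mulr_ge0 // ltW.
have l1 : 1 <= l by apply: le_trans l2; lra.
have l1' : 1 < l by apply: lt_le_trans l2; lra.
have l0 : 0 < l by lra.
have lb : 2 * b <= a * l ^+ p.
  apply: (@le_trans _ _ (a * l)); last by rewrite ler_pM2l // ler_eXnr.
  rewrite /l mulrDr; have -> : a * (2 * b / a) = 2 * b by field; rewrite gt_eqF.
  lra.
have Ll : 0 < ln l by exact: ln_gt0.
pose C := b * l ^+ p; pose c := a / 2.
pose B := C / ln l; pose A := c / ln l.
have C0 : 0 < C by rewrite mulr_gt0 // exprn_gt0.
have B0 : 0 < B by rewrite divr_gt0.
have A0 : 0 < A by rewrite divr_gt0 // divr_gt0.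
pose K := ((N1 / l) ^+ p)^-1.
exists A, B, (A * ln (N1 / l)), (K + B * ln N1); split => //.
pose f := fun x : borelType T => (phi x `^ (- p%:R))%:E.
pose Psi N := (\int[nu]_(x in [set x : borelType T | (N <= phi x)%R]) f x)%E.
pose J N := (\int[nu]_(x in [set x : borelType T | (N < phi x)%R]) f x)%E.
have f0 x : (0 <= f x)%E by rewrite lee_fin powR_ge0.
have mf : measurable_fun (setT : set (borelType T)) f.
  apply/measurable_EFinP; apply: measurableT_comp (measurable_powR _) _.
  exact: cont_mfun.
have st M : 0 < M -> l * M <= N1 -> (Psi M <= C%:E + Psi (l * M)%R)%E /\ (c%:E + J (l * M)%R <= J M)%E.
  move=> M0 lM; exact: (@steps R T nu phi phic phi0 p p0 a b N1 a0 b0 HF l l1 lb M M0 lM).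
have PsiJ N : (J N <= Psi N)%E.
  apply: ge0_subset_integral; [exact: m_gt|exact: m_ge| |by move=> x _; exact: f0|].
    by apply: measurable_funS mf => //; exact: m_ge.
  by move=> x /= /ltW.
have lnlN N : 0 < N -> ln (l * N) = ln l + ln N.
  by move=> N0; rewrite lnM ?posrE.
have key m : forall N, 0 < N -> N <= N1 -> N1 < N * l ^+ m ->
    (Psi N <= (- B * ln N + (K + B * ln N1))%:E)%E /\
    ((- A * ln N + A * ln (N1 / l))%:E <= J N)%E.
  elim: m => [|m IH] N N0 NN1 H.
    by rewrite expr0 mulr1 in H; move: (lt_le_trans H NN1); rewrite ltxx.
  case: (leP (l * N) N1) => hl.
    rewrite exprS mulrA [N * l]mulrC in H.
    have lN0 : 0 < l * N by rewrite mulr_gt0.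
    have [IU IL] := IH (l * N) lN0 hl H.
    have [SU SL] := st N N0 hl.
    split.
      apply: (le_trans SU); apply: (le_trans (leeD2l _ IU)).
      rewrite -EFinD lee_fin lnlN // le_eqVlt; apply/orP; left; apply/eqP.
      by rewrite /B; field; rewrite gt_eqF.
    apply: le_trans SL; apply: le_trans (leeD2l _ IL).
    rewrite -EFinD lee_fin lnlN // le_eqVlt; apply/orP; left; apply/eqP.
    by rewrite /A; field; rewrite gt_eqF.
  have hN : N1 / l < N by rewrite ltr_pdivrMr // mulrC.
  have N1l0 : 0 < N1 / l by rewrite divr_gt0.
  have lnN : ln (N1 / l) <= ln N by rewrite ler_ln ?posrE // ltW.
  have lnN1 : ln N <= ln N1 by rewrite ler_ln ?posrE.
  split.
    have mS : measurable [set x : borelType T | (N <= phi x)%R] by exact: m_ge.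
    apply: (@le_trans _ _ (\int[nu]_(x in [set x : borelType T | (N <= phi x)%R]) (cst ((N ^+ p)^-1)%:E) x)%E).
      apply: (ge0_le_integral _ mS).
      + by move=> x _; exact: f0.
      + exact: measurable_funS mf.
      + exact: measurable_cst.
      + move=> x /= h1; rewrite /f lee_fin powRN powR_mulrn ?phi0 //.
        rewrite lef_pV2 ?posrE ?exprn_gt0 //; last by apply: lt_le_trans h1.
        by apply: lerXn2r => //; rewrite nnegrE ?phi0 // ltW.
    rewrite integral_cst //.
    apply: (@le_trans _ _ ((N ^+ p)^-1)%:E).
      rewrite -[X in (_ <= X)%E]mule1; apply: lee_wpmul2l.
        by rewrite lee_fin invr_ge0 ltW // exprn_gt0.
      exact: probability_le1.
    rewrite lee_fin.
    have : (N ^+ p)^-1 <= K.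
      rewrite /K lef_pV2 ?posrE ?exprn_gt0 //.
      by apply: lerXn2r; rewrite ?nnegrE ltW.
    have : 0 <= B * (ln N1 - ln N) by rewrite mulr_ge0 ?subr_ge0 // ltW.
    lra.
  apply: (@le_trans _ _ 0%E); last by apply: integral_ge0 => x _; exact: f0.
  rewrite lee_fin.
  have : 0 <= A * (ln N - ln (N1 / l)) by rewrite mulr_ge0 ?subr_ge0 // ltW.
  lra.
move=> N N0 NN1.
pose m := Num.Def.archi_bound (N1 / N).
have hm : N1 / N < m%:R by apply: archi_boundP; rewrite divr_ge0 // ltW.
have hm2 : N1 < N * l ^+ m.
  have := @pow_ge R l m l2.
  rewrite ltr_pdivrMr // in hm.
  move=> h; apply: (lt_le_trans hm); rewrite mulrC ler_pM2l //.
  by apply: le_trans h; lra.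
have [U L] := key m N N0 NN1 hm2.
split; last exact: U.
exact: le_trans L (PsiJ N).
Qed.


Lemma unif_near (R : realType) (T : ptopologicalType) (cT : compact [set: T])
  (i : T -> T -> R) (i_cont : continuous (fun p : T * T => i p.1 p.2))
  (zeta : T) (e : R) : 0 < e ->
  \forall z \near zeta, forall eta, `|i eta z - i eta zeta| < e.
Proof.
move=> e0.
have cov := proj1 (compact_near_coveringP _) cT.
have := @cov T (nbhs zeta) (fun z eta => `|i eta z - i eta zeta| < e) _.
have H : forall x, [set: T] x -> \forall x' \near x & z \near nbhs zeta,
   `|i x' z - i x' zeta| < e.
  move=> x _.
  have := (proj1 (cvgrPdist_lt _ _) (i_cont (x, zeta)) (e / 2)).
  have e2 : 0 < e / 2 by rewrite divr_gt0.
  move=> /(_ _ e2) [[U V] /= [Ux Vz] UV].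
  exists (U, V) => //= -[x' z] /= [Ux' Vz'].
  have h1 := UV (x', z) (conj Ux' Vz').
  have h2 := UV (x', zeta) (conj Ux' (nbhs_singleton Vz)).
  rewrite /= in h1 h2.
  rewrite distrC in h1.
  have := ltrD h1 h2; rewrite -splitr; apply: le_lt_trans.
  rewrite -[i x' z - i x' zeta](subrKA (i x zeta)).
  exact: ler_normD.
move=> /(_ _ H); apply: filterS => z Hz eta; exact: Hz.
Qed.


Theorem mainTheorem12 (R : realType) (g : nat) (hg : (2 <= g)%N)
  (T : ptopologicalType) (hT : hausdorff_space T) (cT : compact [set: T])
  (nu : probability (borelType T) R) (i : T -> T -> R)
  (i_cont : continuous (fun p : T * T => i p.1 p.2))
  (i_ge0 : forall x y, 0 <= i x y)
  (i_sym : forall x y, i x y = i y x)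
  (zeta : T) (xi : nat -> T) (N0 a b : R) :
  let h : R := 6 * g%:R - 6 in
  xi @ \oo --> zeta ->
  0 < N0 -> 0 < a -> 0 < b ->
  (forall (k : nat) (N : R), 0 < N -> N <= N0 ->
     ((a * N `^ (h / 2))%:E <= nu [set eta : borelType T | (i eta (xi k) <= N)%R])%E /\
     (nu [set eta : borelType T | (i eta (xi k) <= N)%R] <= (b * N `^ (h / 2))%:E)%E) ->
  exists N1 A B D1 D2 : R,
    [/\ 0 < N1, N1 <= N0, 0 < A, 0 < B &
      forall N : R, 0 < N -> N <= N1 ->
        ((- A * ln N + D1)%:E <= Psi_ge nu i h zeta N)%E /\
        (Psi_ge nu i h zeta N <= (- B * ln N + D2)%:E)%E].
Proof.
move=> h xi_cvg N00 a0 b0 Hb.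
pose p := (3 * g - 3)%N.
have p0 : (0 < p)%N by rewrite /p; lia.
have hp : h / 2 = p%:R.
  rewrite /h /p natrB; last by lia.
  rewrite natrM; lra.
have contl c : continuous (fun x => i x c).
  move=> x; apply: (continuous_comp (f := fun x => (x, c)) (g := fun q : T * T => i q.1 q.2)).
    by apply: cvg_pair; [exact: cvg_id | exact: cvg_cst].
  exact: i_cont.
have contr c : continuous (fun x => i c x).
  move=> x; apply: (continuous_comp (f := fun x => (c, x)) (g := fun q : T * T => i q.1 q.2)).
    by apply: cvg_pair; [exact: cvg_cst | exact: cvg_id].
  exact: i_cont.
have HF : forall N, 0 < N -> N <= N0 / 2 ->
   (((a / 2 ^+ p) * N ^+ p)%:E <= nu [set x : borelType T | (i zeta x <= N)%R])%E /\
   (nu [set x : borelType T | (i zeta x <= N)%R] <= ((b * 2 ^+ p) * N ^+ p)%:E)%E.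
  move=> N NP NN0.
  have e0 : 0 < N / 2 by rewrite divr_gt0.
  have Hn := @unif_near R T cT i i_cont zeta (N / 2) e0.
  have := xi_cvg _ Hn.
  move=> [k0 _ Hk]; have {Hk} Hk := Hk k0 (leqnn k0); simpl in Hk.
  have [lo _] := Hb k0 (N / 2) e0 ltac:(lra).
  have [_ hi] := Hb k0 (2 * N) ltac:(lra) ltac:(lra).
  rewrite hp (powR_mulrn _ (ltW e0)) in lo.
  rewrite hp (powR_mulrn _ (ltW (mulr_gt0 (ltr0Sn _ 1) NP))) in hi.
  have mz := @m_le R T (fun x => i zeta x) N (contr _).
  have m1 := @m_le R T (fun x => i x (xi k0)) (N / 2) (contl _).
  have m2 := @m_le R T (fun x => i x (xi k0)) (2 * N) (contl _).
  have t2 : (2:R) ^+ p != 0 by rewrite expf_neq0.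
  split.
    apply: le_trans (le_trans lo _).
      rewrite lee_fin expr_div_n le_eqVlt; apply/orP; left; apply/eqP.
      by field.
    apply: le_measure; rewrite ?inE //.
    move=> x /= h1; rewrite (i_sym zeta); have := Hk x; rewrite ltr_norml => /andP[h2 h3].
    lra.
  apply: le_trans (le_trans _ hi) _.
    apply: le_measure; rewrite ?inE //.
    move=> x /= h1; rewrite (i_sym zeta) in h1; have := Hk x; rewrite ltr_norml => /andP[h2 h3].
    lra.
  rewrite lee_fin exprMn le_eqVlt; apply/orP; left; apply/eqP.
  by ring.
have N10 : 0 < N0 / 2 by lra.
have a'0 : 0 < a / 2 ^+ p by rewrite divr_gt0 // exprn_gt0.
have b'0 : 0 < b * 2 ^+ p by rewrite mulr_gt0 // exprn_gt0.
have [A [B [D1 [D2 [A0 B0 H]]]]] := @core R T nu (fun x => i zeta x) (contr zeta)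
  (fun x => i_ge0 _ _) p p0 (a / 2 ^+ p) (b * 2 ^+ p) (N0 / 2) a'0 b'0 N10 HF.
exists (N0 / 2), A, B, D1, D2; split => //; first lra.
move=> N NP NN1; rewrite /Psi_ge hp; exact: H.
Qed.
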